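(* Let $n>1$ be an integer. (1) If $n$ is $2$-$T_0T^\ast$-perfect then $n=p_1^3$ for some prime $p_1$; (2) if $n$ is $3$-$T_0T^\ast$-perfect then $n=p_1^5$; (3) if $n$ is $4$-$T_0T^\ast$-perfect then $n=p_1^7$; (4) if $n$ is $5$-$T_0T^\ast$-perfect then $n=p_1^9$; (5) if $n$ is $6$-$T_0T^\ast$-perfect then $n=p_1^{11}$; (6) if $n$ is $7$-$T_0T^\ast$-perfect then $n=p_1^{13}$; (7) if $n$ is $8$-$T_0T^\ast$-perfect then $n=p_1^{15}$; (8) if $n$ is $9$-$T_0T^\ast$-perfect then $n=p_1^{17}$ or $n=p_1p_2$ for distinct primes $p_1,p_2$; (9) if $n$ is $10$-$T_0T^\ast$-perfect then $n=p_1^{19}$; where in each case $p_1$ is a prime.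
   Context: For a positive integer $m$, $T(m)$ denotes the product of all positive divisors of $m$, and $T^\ast(m)$ the product of all unitary divisors of $m$ (divisors $d$ with $\gcd(d,m/d)=1$). For an integer $k\ge 2$, an integer $n>1$ is called $k$-$T_0T^\ast$-perfect if $T(T^\ast(n))=n^k$. *)

(* Defs.v *)
From mathcomp Require Import all_boot.
Set Implicit Arguments. Unset Strict Implicit. Unset Printing Implicit Defensive.

Definition T (m : nat) : nat := \prod_(d <- divisors m) d.

Definition Tstar (m : nat) : nat :=
  \prod_(d <- divisors m | coprime d (m %/ d)) d.

Definition kT0Tstar_perfect (k n : nat) : Prop :=
  1 < n /\ T (Tstar n) = n ^ k.

(* Main.v *)
From mathcomp Require Import all_boot zify.
Require Import Defs.
Set Implicit Arguments. Unset Strict Implicit. Unset Printing Implicit Defensive.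

Lemma divdiv m d : 0 < m -> d %| m -> m %/ (m %/ d) = d.
Proof. by move=> m0 dm; rewrite divnA // mulnC mulnK. Qed.

Lemma perm_divc m : 0 < m ->
  perm_eq (divisors m) [seq m %/ d | d <- divisors m].
Proof.
move=> m0; apply: uniq_perm; first exact: divisors_uniq.
  rewrite map_inj_in_uniq ?divisors_uniq // => x y.
  rewrite -!dvdn_divisors // => xm ym E.
  by rewrite -(divdiv m0 xm) E divdiv.
move=> x; apply/idP/mapP.
  rewrite -dvdn_divisors // => xm; exists (m %/ x); last by rewrite divdiv.
  by rewrite -dvdn_divisors // dvdn_div.
by case=> d; rewrite -!dvdn_divisors // => dm ->; apply: dvdn_div.
Qed.

Lemma prod_pair m (P : pred nat) : 0 < m ->
  (forall d, d %| m -> P (m %/ d) = P d) ->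
  (\prod_(d <- divisors m | P d) d) ^ 2 = m ^ (count P (divisors m)).
Proof.
move=> m0 HP.
have E : \prod_(d <- divisors m | P d) d = \prod_(d <- divisors m | P d) (m %/ d).
  rewrite (perm_big _ (perm_divc m0)) big_map big_seq_cond [RHS]big_seq_cond.
  apply: eq_bigl => d; case: (boolP (d \in divisors m)) => //=.
  by rewrite -dvdn_divisors // => /HP ->.
rewrite expnS expn1 {2}E -big_split /=.
rewrite big_seq_cond (eq_bigr (fun _ => m)); last first.
  by move=> d /andP[]; rewrite -dvdn_divisors // => dm _; rewrite mulnC divnK.
by rewrite -big_seq_cond big_const_seq iter_muln_1.
Qed.
Lemma divsq_odd m : 0 < m -> odd (size (divisors (m ^ 2))).
Proof.
move=> m0; set M := m ^ 2; set s := divisors M.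
have M0 : 0 < M by rewrite expn_gt0 m0.
have e1 : count (fun d => d < m) s + count (fun d => m <= d) s = size s.
  by rewrite -(count_predC (fun d => d < m)); congr (_ + _); apply: eq_count => d /=; rewrite -leqNgt.
have e2 : count (fun d => m <= d) s = count (pred1 m) s + count (fun d => m < d) s.
  rewrite -count_predUI (@eq_count _ (predI _ _) pred0); last first.
    by move=> d /=; apply/andP => -[/eqP -> ]; rewrite ltnn.
  rewrite count_pred0 addn0; apply: eq_count => d /=; rewrite leq_eqVlt eq_sym //.
have e3 : count (pred1 m) s = 1.
  by rewrite count_uniq_mem ?divisors_uniq // -dvdn_divisors // /M expnS dvdn_mulr.
have e4 : count (fun d => m < d) s = count (fun d => d < m) s.
  rewrite ((permP (perm_divc M0)) (fun d => m < d)) count_map; apply: eq_in_count => d.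
  rewrite /s -dvdn_divisors // => dM; have d0 : 0 < d by apply: dvdn_gt0 dM.
  move/divnK: dM; rewrite /preim /= /M.
  set e := m ^ 2 %/ d => E.
  apply/idP/idP => H; nia.
rewrite -e1 e2 e3 e4 addnCA addnn oddD odd_double.
by [].
Qed.

Lemma logpq p q x y : prime p -> prime q -> p != q -> logn p (p ^ x * q ^ y) = x.
Proof.
move=> pp pq npq; rewrite lognM ?expn_gt0 ?prime_gt0 // !lognX.
by rewrite !logn_prime // eqxx (negbTE npq) muln0 addn0 muln1.
Qed.

Lemma nine_divs p q m : prime p -> prime q -> p != q -> 0 < m -> p^2 * q^2 %| m ->
  9 <= size (divisors m) /\ (m != p^2 * q^2 -> 10 <= size (divisors m)).
Proof.
move=> pp pq npq m0 dm.
set L := [seq p ^ x * q ^ y | x <- iota 0 3, y <- iota 0 3].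
have uL : uniq L.
  apply: allpairs_uniq => // -[x1 y1] [x2 y2] _ _ /= E.
  have := logpq x1 y1 pp pq npq; rewrite E logpq // => ->.
  have nqp : q != p by rewrite eq_sym.
  have := logpq y1 x1 pq pp nqp.
  by rewrite mulnC E mulnC logpq // => ->.
have sL : size L = 9 by rewrite size_allpairs.
have dL : forall z, z \in L -> z %| p^2 * q^2.
  move=> z /allpairsP [[x y] /= [xi yi ->]].
  by apply: dvdn_mul; apply: dvdn_exp2l; [move: xi|move: yi]; rewrite !inE => /or3P[]/eqP->.
have subL : {subset L <= divisors m}.
  by move=> z zL; rewrite -dvdn_divisors //; apply: dvdn_trans (dL z zL) dm.
split; first by rewrite -sL; apply: uniq_leq_size.
move=> nm.
have : size (m :: L) <= size (divisors m).
  apply: uniq_leq_size.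
    rewrite cons_uniq uL andbT; apply/negP => mL.
    have pq0 : 0 < p ^ 2 * q ^ 2 by rewrite muln_gt0 !expn_gt0 !prime_gt0.
    have le1 := dvdn_leq pq0 (dL m mL).
    have le2 := dvdn_leq m0 dm.
    by move/negP: nm; apply; apply/eqP; apply: anti_leq; rewrite le1 le2.
  by move=> z; rewrite inE => /orP[/eqP -> | /subL //]; rewrite -dvdn_divisors // dvdnn.
move=> H; apply: leq_trans H; change (9 < (size L).+1); by rewrite sL.
Qed.

Definition unit_pred (n : nat) := fun d => coprime d (n %/ d).
Definition ucnt n := count (unit_pred n) (divisors n).

Lemma Tstar_sq n : 0 < n -> Tstar n ^ 2 = n ^ ucnt n.
Proof.
move=> n0; rewrite /Tstar /ucnt; apply: (prod_pair (P := unit_pred n)) => // d dn.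
by rewrite /unit_pred divdiv // coprime_sym.
Qed.

Lemma T_sq m : 0 < m -> T m ^ 2 = m ^ size (divisors m).
Proof.
move=> m0; rewrite /T -(count_predT (divisors m)).
exact: (prod_pair (P := xpredT)).
Qed.

Lemma divs_pow p a : prime p -> size (divisors (p ^ a)) = a.+1.
Proof.
move=> pp; have p1 := prime_gt1 pp.
have pa0 : 0 < p ^ a by rewrite expn_gt0 prime_gt0.
have : perm_eq (divisors (p ^ a)) [seq p ^ i | i <- iota 0 a.+1].
  apply: uniq_perm; first exact: divisors_uniq.
    by rewrite map_inj_uniq ?iota_uniq //; apply: expnI.
  move=> d; rewrite -dvdn_divisors //; apply/idP/mapP.
    by case/(dvdn_pfactor _ _ pp) => i ia ->; exists i => //; rewrite mem_iota.
  by case=> i; rewrite mem_iota /= => ia ->; apply/(dvdn_pfactor _ _ pp); exists i.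
by move/perm_size ->; rewrite size_map size_iota.
Qed.

Lemma ucnt_pow p a : prime p -> 0 < a -> ucnt (p ^ a) = 2.
Proof.
move=> pp a0; have p1 := prime_gt1 pp.
have pa0 : 0 < p ^ a by rewrite expn_gt0 prime_gt0.
have pa1 : p ^ a != 1 by rewrite -(expn0 p) eqn_exp2l // -lt0n.
rewrite /ucnt (eq_in_count (a2 := predU (pred1 1) (pred1 (p ^ a)))); last first.
  move=> d; rewrite -dvdn_divisors // => /(dvdn_pfactor _ _ pp) [j ja ->].
  rewrite /unit_pred /= -expnB ?prime_gt0 //.
  case: j ja => [|j] ja; first by rewrite expn0 coprime1n eqxx.
  case: (ltnP j.+1 a) => ja'.
    rewrite coprime_pexpl // coprime_pexpr ?subn_gt0 // prime_coprime // dvdnn /=.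
    rewrite -(expn0 p) eqn_exp2l // eqn_exp2l //; apply/esym/negbTE.
    by rewrite (ltn_eqF ja').
  have -> : j.+1 = a by apply/eqP; rewrite eqn_leq ja ja'.
  by rewrite subnn expn0 coprimen1 eqxx orbT.
have H := count_predUI (pred1 1) (pred1 (p ^ a)) (divisors (p ^ a)).
rewrite (@eq_count _ (predI (pred1 1) (pred1 (p ^ a))) pred0) ?count_pred0 ?addn0 in H; last first.
  by move=> d /=; case: eqP => // ->; rewrite eq_sym (negbTE pa1).
rewrite H !count_uniq_mem ?divisors_uniq // divisor1 divisors_id //.
Qed.

Lemma ucnt_ge4 n p q : 0 < n -> prime p -> prime q -> p != q -> p %| n -> q %| n ->
  4 <= ucnt n.
Proof.
move=> n0 pp pq npq pn qn.
set a := logn p n; set x := p ^ a; set y := n %/ x.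
have xn : x %| n by apply: pfactor_dvdnn.
have exy : x * y = n by rewrite mulnC divnK.
have a1 : 0 < a by rewrite logn_gt0 mem_primes pp n0 pn.
have x1 : 1 < x by rewrite -(expn0 p) ltn_exp2l // prime_gt1.
have y0 : 0 < y by move: n0; rewrite -exy muln_gt0 => /andP[].
have lpy : logn p y = 0.
  have x0 : 0 < x by apply: ltn_trans x1.
  by have := lognM p x0 y0; rewrite exy pfactorK // -/a; lia.
have cpy : coprime p y.
  rewrite prime_coprime //; apply/negP => py.
  by have := logn_gt0 p y; rewrite mem_primes pp y0 py lpy.
have cxy : coprime x y by rewrite coprime_pexpl.
have qy : q %| y.
  have cqx : coprime q x.
    by rewrite coprime_pexpr // prime_coprime // dvdn_prime2 // eq_sym.
  by rewrite -(Gauss_dvdr y cqx) exy.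
have y1 : 1 < y by apply: leq_trans (prime_gt1 pq) (dvdn_leq y0 qy).
have nxy : x != y.
  apply/negP => /eqP exy'; move: lpy; rewrite -exy' pfactorK //; lia.
have sub : {subset [:: 1; n; x; y] <= filter (unit_pred n) (divisors n)}.
  move=> d; rewrite !inE mem_filter /unit_pred -dvdn_divisors //.
  case/or4P => /eqP ->.
  - by rewrite divn1 coprime1n dvd1n.
  - by rewrite divnn n0 coprimen1 dvdnn.
  - by rewrite /y xn andbT.
  - have ny : n %/ y = x by rewrite -exy mulnK.
    by rewrite ny coprime_sym cxy -exy dvdn_mull.
have := uniq_leq_size _ sub; rewrite size_filter; apply.
have xn' : x < n by rewrite -exy -{1}(muln1 x) ltn_mul2l (ltn_trans _ x1).
have yn' : y < n by rewrite -exy -{1}(mul1n y) ltn_mul2r y0.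
move: nxy; rewrite /= !inE !negb_or => ->.
by rewrite !neq_ltn x1 y1 xn' yn' (ltn_trans x1 xn') !orbT.
Qed.

Lemma key n k : 1 < n -> T (Tstar n) = n ^ k ->
  (exists p a, [/\ prime p, n = p ^ a & a.+1 = k * 2]) \/
  (k = 9 /\ exists p q, [/\ prime p, prime q, p != q & n = p * q]) \/ 10 < k.
Proof.
move=> n1 HT; have n0 : 0 < n by apply: ltn_trans n1.
set U := Tstar n in HT.
have HU : U ^ 2 = n ^ ucnt n by apply: Tstar_sq.
have U0 : 0 < U.
  have : 0 < n ^ ucnt n by rewrite expn_gt0 n0.
  by rewrite -HU; case: (U).
have HTU := T_sq U0; rewrite HT in HTU.
set p := pdiv n.
have pp : prime p by apply: pdiv_prime.
have pn : p %| n by apply: pdiv_dvd.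
case: (boolP (p.-nat n)) => [pnat | npnat].
  left; case: (p_natP pnat) => a na; exists p, a; split => //.
  have a0 : 0 < a by case: a na n1 => [->|].
  have Un : U = n by apply: (expIn (e := 2)) => //; rewrite HU na ucnt_pow // -na.
  have E : size (divisors U) = a.+1 by rewrite Un na divs_pow.
  by move: HTU; rewrite E Un -expnM => /expnI ->.
right.
have [q qn nqp] : exists2 q, q \in primes n & q != p.
  move: npnat; rewrite /pnat n0 /= => /allPn [q qn nq]; exists q => //.
move: qn; rewrite mem_primes => /and3P [pq _ qn].
have npq : p != q by rewrite eq_sym.
set u := ucnt n in HU; set t := size (divisors U) in HTU.
have u4 : 4 <= u by apply: (ucnt_ge4 n0 pp pq npq).
have Hk : k * 4 = u * t.
  apply: (expnI n1).
  have e1 : n ^ (k * 4) = (U ^ 2) ^ t.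
    by rewrite -[4]/(2 * 2) mulnA !expnM HTU -!expnM (mulnC t 2).
  by rewrite e1 HU -expnM.
have l2 : forall r, prime r -> r %| n -> r ^ 2 %| U.
  move=> r pr rn; rewrite pfactor_dvdn //.
  have := congr1 (logn r) HU; rewrite !lognX.
  have : 0 < logn r n by rewrite logn_gt0 mem_primes pr n0 rn.
  lia.
have cpq : coprime (p ^ 2) (q ^ 2).
  by rewrite coprime_pexpl // coprime_pexpr // prime_coprime // dvdn_prime2.
have dU : p ^ 2 * q ^ 2 %| U by rewrite Gauss_dvd // !l2.
have [t9 t10] := nine_divs pp pq npq U0 dU.
case: (ltnP 10 k) => k10; [by right | left].
have u9 : u * 9 <= 40.
  apply: leq_trans (leq_mul (leqnn u) t9) _; rewrite -Hk.
  exact: (leq_mul k10 (leqnn 4)).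
have u4' : u = 4 by lia.
have Un : U = n ^ 2 by apply: (expIn (e := 2)) => //; rewrite HU u4' -expnM.
have kt : k = t by move: Hk; rewrite u4' mulnC => /eqP; rewrite eqn_mul2l => /eqP.
have todd : odd t by rewrite /t Un divsq_odd.
have k9 : k = 9.
  have k9' : 9 <= k by rewrite kt.
  have : k = 9 \/ k = 10 by move: k9' k10; clear; lia.
  by case=> // E; move: todd; rewrite -kt E.
split => //; exists p, q; split => //.
apply: (expIn (e := 2)) => //; rewrite expnMn.
case: (eqVneq (n ^ 2) (p ^ 2 * q ^ 2)) => // ne.
by have := t10; rewrite -/t -kt k9 ltnn Un ne => /(_ isT).
Qed.

Lemma one k n : k != 9 -> k <= 10 -> kT0Tstar_perfect k n ->
  exists p, prime p /\ n = p ^ (k * 2).-1.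
Proof.
move=> k9 k10 [n1 H]; case: (key n1 H) => [[p [a [pp -> ea]]]|[[k9' _]|k10']].
- by exists p; rewrite -ea.
- by rewrite k9' in k9.
- by rewrite ltnNge k10 in k10'.
Qed.

Theorem mainTheorem6 (n : nat) : 1 < n ->
  (kT0Tstar_perfect 2 n -> exists p, prime p /\ n = p ^ 3) /\
  (kT0Tstar_perfect 3 n -> exists p, prime p /\ n = p ^ 5) /\
  (kT0Tstar_perfect 4 n -> exists p, prime p /\ n = p ^ 7) /\
  (kT0Tstar_perfect 5 n -> exists p, prime p /\ n = p ^ 9) /\
  (kT0Tstar_perfect 6 n -> exists p, prime p /\ n = p ^ 11) /\
  (kT0Tstar_perfect 7 n -> exists p, prime p /\ n = p ^ 13) /\
  (kT0Tstar_perfect 8 n -> exists p, prime p /\ n = p ^ 15) /\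
  (kT0Tstar_perfect 9 n ->
     (exists p, prime p /\ n = p ^ 17) \/
     (exists p1 p2, [/\ prime p1, prime p2, p1 != p2 & n = p1 * p2])) /\
  (kT0Tstar_perfect 10 n -> exists p, prime p /\ n = p ^ 19).
Proof.
move=> n1; split; first by apply: (@one 2 n).
split; first by apply: (@one 3 n).
split; first by apply: (@one 4 n).
split; first by apply: (@one 5 n).
split; first by apply: (@one 6 n).
split; first by apply: (@one 7 n).
split; first by apply: (@one 8 n).
split; last by apply: (@one 10 n).
move=> [_ H]; case: (key n1 H) => [[p [a [pp -> ea]]]|[[_ E]|//]].
- by left; exists p; split => //; have -> : a = 17 by move: ea; clear; lia.
- by right.
Qed.
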